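(* Let $k$ be an algebraically closed field, $\Lambda$ a basic finite-dimensional $k$-algebra, and let $M$ and $N$ be $d$-dimensional $\Lambda$-modules. The following are equivalent: (1) There exist composition series $(0)=M_0\subseteq M_1\subseteq\cdots\subseteq M_d=M$ and $(0)=N_0\subseteq N_1\subseteq\cdots\subseteq N_d=N$ such that $M_i/M_{i-1}\simeq N_i/N_{i-1}$ for $1\leq i\leq d$. (2) For any orthogonal set $E$ of idempotents in $\Lambda$, there exist triangular representations $\mu,\nu\in\mathrm{mod}_d\Lambda$ of $M$ and $N$ respectively such that $\mu(e)=\nu(e)$ for all $e\in E$. (3) There exist a complete orthogonal set $E$ of primitive idempotents in $\Lambda$ and triangular representations $\mu,\nu\in\mathrm{mod}_d\Lambda$ of $M$ and $N$ respectively such that $\mu(e)=\nu(e)$ for all $e\in E$.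
   Context: A $d$-dimensional representation of $\Lambda$ is a $k$-algebra homomorphism $\rho:\Lambda\to M_d(k)$; it is a representation of the module $M$ if $k^d$ with the structure $\lambda\cdot v=\rho(\lambda)v$ is isomorphic to $M$. $\mathrm{mod}_d\Lambda$ is the set of all such representations. A representation is triangular if all $\rho(\lambda)$ are upper triangular matrices. A set of idempotents is orthogonal if $e_ie_j=0$ for $i\neq j$; a nonzero idempotent is primitive if it is not a sum of two nonzero orthogonal idempotents; an orthogonal set of primitive idempotents is complete if it is not a proper subset of a larger orthogonal set of primitive idempotents. *)

(* Defs.v *)
From HB Require Import structures.
From mathcomp Require Import all_boot all_order all_algebra.
From mathcomp Require Import falgebra.
Set Implicit Arguments. Unset Strict Implicit. Unset Printing Implicit Defensive.
Import GRing.Theory.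
Local Open Scope ring_scope.

Section Defs.
Variables (k : fieldType) (A : falgType k).

Definition idempotent (e : A) : Prop := e * e = e.

Definition orthogonal_idempotents (E : {pred A}) : Prop :=
  (forall e, e \in E -> idempotent e) /\
  (forall e f, e \in E -> f \in E -> e != f -> e * f = 0).

Definition primitive_idempotent (e : A) : Prop :=
  [/\ idempotent e, e != 0 &
      ~ (exists f g : A, idempotent f /\ idempotent g /\ f != 0 /\ g != 0 /\
                          f * g = 0 /\ g * f = 0 /\ e = f + g)].

Definition orthogonal_primitive_set (E : {pred A}) : Prop :=
  orthogonal_idempotents E /\ (forall e, e \in E -> primitive_idempotent e).

Definition complete_orthogonal_primitive_set (E : {pred A}) : Prop :=
  orthogonal_primitive_set E /\
  (forall F : {pred A}, orthogonal_primitive_set F ->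
     {subset E <= F} -> {subset F <= E}).

(* the right ideals eA and fA are isomorphic as right A-modules
   (fA = {y | f * y = y}; homomorphisms are given on all of A,
   which loses nothing since eA is a direct summand via x |-> e x) *)
Definition rideal_iso (e f : A) : Prop :=
  exists phi psi : A -> A,
  (forall x y, phi (x + y) = phi x + phi y) /\
  (forall x y, psi (x + y) = psi x + psi y) /\
  (forall x l, phi (x * l) = phi x * l) /\
  (forall x l, psi (x * l) = psi x * l) /\
  (forall x, f * phi (e * x) = phi (e * x)) /\
  (forall x, e * psi (f * x) = psi (f * x)) /\
  (forall x, psi (phi (e * x)) = e * x) /\
  (forall x, phi (psi (f * x)) = f * x).

(* basic algebra (Assem-Simson-Skowronski I.6.1) *)
Definition basic_algebra : Prop :=
  exists E : {pred A}, complete_orthogonal_primitive_set E /\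
    (forall e f, e \in E -> f \in E -> e != f -> ~ rideal_iso e f).

Variable d : nat.

Definition is_rep (rho : A -> 'M[k]_d) : Prop :=
  [/\ (forall (c : k) x y, rho (c *: x + y) = c *: rho x + rho y),
      rho 1 = 1%:M &
      (forall x y, rho (x * y) = rho x *m rho y)].

(* mu is a representation of the module (k^d, rho) : the two module structures
   on k^d are isomorphic *)
Definition rep_of (mu rho : A -> 'M[k]_d) : Prop :=
  exists P : 'M[k]_d, P \in unitmx /\ (forall a, P *m rho a = mu a *m P).

Definition triangular_rep (mu : A -> 'M[k]_d) : Prop :=
  forall a (i j : 'I_d), (j < i)%N -> mu a i j = 0.

(* ---------- submodules and composition series ----------
   The module is k^d (column vectors) with a . v = rho(a) v.  A subspace U
   of k^d is encoded by a matrix S whose row space is {u^T | u in U};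
   in this encoding the action of a is right multiplication by rho(a)^T. *)
Definition act (rho : A -> 'M[k]_d) (a : A) : 'M[k]_d := (rho a)^T.

Definition submodule (rho : A -> 'M[k]_d) (S : 'M[k]_d) : Prop :=
  forall a, (S *m act rho a <= S)%MS.

Definition simple_factor (rho : A -> 'M[k]_d) (S1 S2 : 'M[k]_d) : Prop :=
  (S1 < S2)%MS /\
  (forall U : 'M[k]_d, submodule rho U -> (S1 <= U)%MS -> (U <= S2)%MS ->
     (U == S1)%MS \/ (U == S2)%MS).

Definition composition_series (rho : A -> 'M[k]_d) (S : nat -> 'M[k]_d) : Prop :=
  [/\ (S 0%N == (0 : 'M[k]_d))%MS, (S d == 1%:M)%MS,
      (forall i, (i <= d)%N -> submodule rho (S i)) &
      (forall i, (0 < i <= d)%N -> simple_factor rho (S i.-1) (S i))].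

(* isomorphism of subquotient modules SM2/SM1 (of rhoM) and SN2/SN1 (of rhoN):
   a linear map f : k^d -> k^d (v |-> v *m f in the row encoding) inducing a
   module isomorphism SM2/SM1 -> SN2/SN1 *)
Definition subquot_iso (rhoM : A -> 'M[k]_d) (SM1 SM2 : 'M[k]_d)
                       (rhoN : A -> 'M[k]_d) (SN1 SN2 : 'M[k]_d) : Prop :=
  exists f : 'M[k]_d,
  [/\ (SM2 *m f <= SN2)%MS, (SM1 *m f <= SN1)%MS,
      (forall a, (SM2 *m (act rhoM a *m f - f *m act rhoN a) <= SN1)%MS),
      (SN2 <= SM2 *m f + SN1)%MS &
      (forall v : 'rV[k]_d, (v <= SM2)%MS -> (v *m f <= SN1)%MS -> (v <= SM1)%MS)].

End Defs.

(* Main.v *)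
Require Import Defs.
From HB Require Import structures.
From mathcomp Require Import all_boot all_order all_algebra.
From mathcomp Require Import falgebra.
From Stdlib Require Import Classical.
Import GRing.Theory.
Local Open Scope ring_scope.
Set Implicit Arguments. Unset Strict Implicit. Unset Printing Implicit Defensive.



Section Mat.
Variables (k : fieldType) (d : nat).

Lemma pidM_l n r (M : 'M[k]_(d, n)) i j :
  ((pid_mx r : 'M[k]_d) *m M) i j = (i < r)%N%:R * M i j.
Proof.
rewrite mxE (bigD1 i) //= big1 => [|l nl].
  by rewrite addr0 /pid_mx mxE eqxx.
rewrite /pid_mx mxE; case: eqP => [/val_inj E|]; last by rewrite mul0r.
by rewrite E eqxx in nl.
Qed.

Lemma pidM_r m r (M : 'M[k]_(m, d)) i j :
  (M *m (pid_mx r : 'M[k]_d)) i j = M i j * (j < r)%N%:R.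
Proof.
rewrite mxE (bigD1 j) //= big1 => [|l nl].
  by rewrite addr0 /pid_mx mxE eqxx.
rewrite /pid_mx mxE; case: eqP => [/val_inj E|]; last by rewrite mulr0.
by rewrite E eqxx in nl.
Qed.

Lemma coordL m r (W : 'M[k]_d) (v : 'M[k]_(m, d)) :
  W \in unitmx -> (v <= (pid_mx r : 'M[k]_d) *m W)%MS ->
  v *m invmx W = v *m invmx W *m (pid_mx r : 'M[k]_d).
Proof.
move=> uW /submxP[y ->].
rewrite mulmxA mulmxK // -mulmxA; congr (_ *m _).
apply/matrixP=> i j; rewrite pidM_r /pid_mx !mxE.
case: eqP => [-> | _]; rewrite ?andFb ?mul0r //=; by case: (j < r)%N; rewrite ?mulr1 ?mulr0.
Qed.

Lemma coordR m r (W : 'M[k]_d) (x : 'M[k]_(m, d)) :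
  x = x *m (pid_mx r : 'M[k]_d) -> (x *m W <= (pid_mx r : 'M[k]_d) *m W)%MS.
Proof. by move=> ->; rewrite -mulmxA submxMl. Qed.


End Mat.

Section Rep.
Variables (k : fieldType) (A : falgType k) (d : nat).
Implicit Types (rho mu : A -> 'M[k]_d) (W : 'M[k]_d).

Definition Bm rho W a := W *m act rho a *m invmx W.
Definition lowtri (M : 'M[k]_d) := forall i j : 'I_d, (i < j)%N -> M i j = 0.
Definition flagged rho W := W \in unitmx /\ forall a, lowtri (Bm rho W a).

Lemma rep0 rho : is_rep rho -> rho 0 = 0.
Proof.
case=> L _ _; have h := L 1 0 0; rewrite !scale1r addr0 in h.
by apply: (@addrI _ (rho 0)); rewrite addr0 -h.
Qed.

Lemma actL rho c x y : is_rep rho -> act rho (c *: x + y) = c *: act rho x + act rho y.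
Proof. by case=> L _ _; rewrite /act L linearD linearZ. Qed.

Lemma act1 rho : is_rep rho -> act rho 1 = 1%:M.
Proof. by case=> _ H _; rewrite /act H trmx1. Qed.

Lemma actM rho x y : is_rep rho -> act rho (x * y) = act rho y *m act rho x.
Proof. by case=> _ _ H; rewrite /act H trmx_mul. Qed.

Lemma act0 rho : is_rep rho -> act rho 0 = 0.
Proof. by move=> h; rewrite /act rep0 // trmx0. Qed.

Lemma flag_act rho W a : W \in unitmx -> W *m act rho a = Bm rho W a *m W.
Proof. by move=> uW; rewrite /Bm mulmxKV. Qed.

Lemma mask_tri (B : 'M[k]_d) i : lowtri B ->
  (pid_mx i : 'M[k]_d) *m B = (pid_mx i : 'M[k]_d) *m B *m (pid_mx i : 'M[k]_d).
Proof.
move=> lB; apply/matrixP => l m; rewrite pidM_r pidM_l.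
case: (ltnP m i) => h; first by rewrite mulr1.
rewrite mulr0; case: (ltnP l i) => h2; last by rewrite mul0r.
by rewrite lB ?mulr0 // (leq_trans h2 h).
Qed.

Lemma flag_sub rho W i : flagged rho W -> submodule rho ((pid_mx i : 'M[k]_d) *m W).
Proof.
case=> uW lB a; rewrite -mulmxA flag_act // mulmxA.
by apply: coordR; rewrite -mask_tri.
Qed.

Lemma mask_diag (B : 'M[k]_d) (j : 'I_d) : lowtri B ->
  (pid_mx j.+1 : 'M[k]_d) *m (B - (B j j)%:M) =
  (pid_mx j.+1 : 'M[k]_d) *m (B - (B j j)%:M) *m (pid_mx j : 'M[k]_d).
Proof.
move=> lB; apply/matrixP => l m; rewrite pidM_r pidM_l.
case: (ltnP m j) => h; first by rewrite mulr1.
rewrite mulr0; case: (ltnP l j.+1) => h2; last by rewrite mul0r.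
rewrite !mxE mul1r; case: (ltngtP l m) => hlm.
- have -> : (l == m) = false by apply/eqP => E; rewrite E ltnn in hlm.
  by rewrite (lB l m hlm) /= mulr0n subr0.
- by rewrite ltnNge (leq_trans (h2 : (l <= j)%N) h) in hlm.
- have E1 : l = m by apply: val_inj.
  have E2 : m = j by apply/val_inj/eqP; rewrite eqn_leq h andbT -E1 -ltnS.
  by rewrite E1 E2 eqxx /= mulr1n subrr.
Qed.

Lemma flag_diag rho W a (j : 'I_d) (v : 'rV[k]_d) : flagged rho W ->
  (v <= (pid_mx j.+1 : 'M[k]_d) *m W)%MS ->
  (v *m act rho a - Bm rho W a j j *: v <= (pid_mx j : 'M[k]_d) *m W)%MS.
Proof.
case=> uW lB hv; set x := v *m invmx W.
have ex : x = x *m pid_mx j.+1 by apply: coordL.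
have -> : v *m act rho a - Bm rho W a j j *: v
   = x *m (Bm rho W a - (Bm rho W a j j)%:M) *m W.
  rewrite /x mulmxBr mulmxBl mul_mx_scalar -scalemxAl mulmxKV //.
  by rewrite -(mulmxA _ (Bm _ _ _)) -flag_act // mulmxA mulmxKV.
apply: coordR; rewrite ex -!mulmxA; congr (_ *m _).
by rewrite (mulmxA (pid_mx j.+1 : 'M[k]_d)) -(mask_diag j (lB a)).
Qed.


Lemma flag_to_rep rho W : is_rep rho -> flagged rho W ->
  let mu := fun a => (Bm rho W a)^T in
  [/\ is_rep mu, rep_of mu rho & triangular_rep mu].
Proof.
move=> hr [uW lB] mu; split.
- split.
  + move=> c x y; rewrite /mu /Bm actL // mulmxDr mulmxDl -scalemxAr -scalemxAl.
    by rewrite linearD linearZ.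
  + by rewrite /mu /Bm act1 // mulmx1 mulmxV // trmx1.
  + move=> x y; rewrite /mu -trmx_mul /Bm (actM x y hr) !mulmxA mulmxKV //.
- exists (invmx W)^T; split; first by rewrite unitmx_tr unitmx_inv.
  move=> a; rewrite /mu -trmx_mul /Bm !mulmxA mulVmx // mul1mx trmx_mul.
  by rewrite /act trmxK.
- by move=> a i j hij; rewrite /mu mxE lB.
Qed.

Lemma rep_to_flag rho mu : triangular_rep mu -> rep_of mu rho ->
  exists W, flagged rho W /\ forall a, Bm rho W a = (mu a)^T.
Proof.
move=> tm [P [uP hP]]; exists (invmx P)^T.
have E : forall a, Bm rho (invmx P)^T a = (mu a)^T.
  move=> a; rewrite /Bm -trmx_inv invmxK /act -!trmx_mul.
  by rewrite mulmxA hP mulmxK.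
split=> //; split; first by rewrite unitmx_tr unitmx_inv.
by move=> a i j hij; rewrite E mxE tm.
Qed.

Lemma rank_flag W (i : nat) : W \in unitmx -> (i <= d)%N ->
  \rank ((pid_mx i : 'M[k]_d) *m W) = i.
Proof.
move=> uW hi; rewrite mxrankMfree ?row_free_unit // rank_pid_mx //.
Qed.

Lemma flag_comp rho W : flagged rho W ->
  composition_series rho (fun i => (pid_mx i : 'M[k]_d) *m W).
Proof.
move=> [uW lB]; split.
- by rewrite /= pid_mx_0 mul0mx; apply/andP; split.
- rewrite /= pid_mx_1 mul1mx; apply/andP; split; first by rewrite submx1.
  by rewrite sub1mx row_full_unit.
- by move=> i _; apply: flag_sub.
- move=> i /andP[i0 id]; have hi1 : (i.-1 <= d)%N by rewrite (leq_trans (leq_pred _)).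
  have le1 : ((pid_mx i.-1 : 'M[k]_d) *m W <= (pid_mx i : 'M[k]_d) *m W)%MS.
    apply: coordR; rewrite mul_pid_mx.
    by rewrite (minn_idPl (leq_pred _)) (minn_idPr hi1).
  have ri := rank_flag uW id; have ri1 := rank_flag uW hi1.
  split.
    rewrite ltmxE le1 /=; apply/negP => /mxrankS.
    by rewrite ri ri1; case: i i0 {id hi1 le1 ri ri1} => // n _; rewrite ltnn.
  move=> U _ h1 h2.
  have r1 := mxrankS h1; have r2 := mxrankS h2.
  rewrite ri1 in r1; rewrite ri in r2.
  case: (leqP (\rank U) i.-1) => hr.
    left; apply/andP; split=> //.
    by rewrite -(mxrank_leqif_sup h1).2 eqn_leq ri1 hr r1.
  right; apply/andP; split=> //.
  rewrite -(mxrank_leqif_sup h2).2 eqn_leq ri r2 /=.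
  by case: i i0 {id hi1 le1 ri ri1 r1 r2 h1 h2} hr.
Qed.


Lemma mask_iso (B C : 'M[k]_d) (i : nat) : lowtri B -> lowtri C ->
  (forall j, B j j = C j j) -> (0 < i)%N ->
  (pid_mx i : 'M[k]_d) *m (B - C) = (pid_mx i : 'M[k]_d) *m (B - C) *m (pid_mx i.-1 : 'M[k]_d).
Proof.
move=> lB lC dBC i0; apply/matrixP => l m; rewrite pidM_r pidM_l.
case: (ltnP m i.-1) => h; first by rewrite mulr1.
rewrite mulr0; case: (ltnP l i) => h2; last by rewrite mul0r.
rewrite !mxE mul1r; case: (ltngtP l m) => hlm.
- by rewrite lB // lC // subrr.
- have hl : (l <= i.-1)%N by rewrite -ltnS prednK.
  by rewrite ltnNge (leq_trans hl h) in hlm.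
- by rewrite (val_inj hlm) dBC subrr.
Qed.

Lemma flag_iso rhoM rhoN WM WN : flagged rhoM WM -> flagged rhoN WN ->
  (forall a j, Bm rhoM WM a j j = Bm rhoN WN a j j) ->
  forall i, (0 < i <= d)%N ->
  subquot_iso rhoM ((pid_mx i.-1 : 'M[k]_d) *m WM) ((pid_mx i : 'M[k]_d) *m WM)
              rhoN ((pid_mx i.-1 : 'M[k]_d) *m WN) ((pid_mx i : 'M[k]_d) *m WN).
Proof.
move=> [uM lM] [uN lN] dg i /andP[i0 id].
exists (invmx WM *m WN).
have Ef : forall r, (pid_mx r : 'M[k]_d) *m WM *m (invmx WM *m WN) = pid_mx r *m WN.
  by move=> r; rewrite mulmxA mulmxK.
split.
- by rewrite Ef.
- by rewrite Ef.
- move=> a; have -> : (pid_mx i : 'M[k]_d) *m WM *m (act rhoM a *m (invmx WM *m WN)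
        - invmx WM *m WN *m act rhoN a)
      = (pid_mx i : 'M[k]_d) *m (Bm rhoM WM a - Bm rhoN WN a) *m WN.
    rewrite /Bm mulmxBr (mulmxBr (pid_mx i)) mulmxBl !mulmxA !mulmxK // !mulmxKV //.
  apply: coordR; apply: mask_iso => //.
- by rewrite Ef addsmxSl.
- move=> v _; rewrite mulmxA => /(coordL uN); rewrite mulmxK // => ex.
  by rewrite -(mulmxKV uM v) ex; apply: coordR; rewrite -!ex.
Qed.

Lemma iso_diag rhoM rhoN WM WN (SM SN : nat -> 'M[k]_d) (j : 'I_d) a :
  flagged rhoM WM -> flagged rhoN WN ->
  (SM j == (pid_mx j : 'M[k]_d) *m WM)%MS -> (SM j.+1 == (pid_mx j.+1 : 'M[k]_d) *m WM)%MS ->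
  (SN j == (pid_mx j : 'M[k]_d) *m WN)%MS -> (SN j.+1 == (pid_mx j.+1 : 'M[k]_d) *m WN)%MS ->
  subquot_iso rhoM (SM j) (SM j.+1) rhoN (SN j) (SN j.+1) ->
  Bm rhoM WM a j j = Bm rhoN WN a j j.
Proof.
move=> fM fN /andP[M1 M1'] /andP[M2 M2'] /andP[N1 N1'] /andP[N2 N2'].
case=> f [h1 h2 h3 h4 h5].
have [uM _] := fM; have [uN _] := fN.
set vM := row j WM.
have vM2 : (vM <= (pid_mx j.+1 : 'M[k]_d) *m WM)%MS.
  rewrite /vM rowE; apply: coordR; apply/matrixP => l m.
  rewrite pidM_r !mxE; case: (m =P j) => [->|_]; rewrite ?andbT ?andbF ?mul0r //.
  by rewrite ltnSn mulr1.
have vM1 : ~~ (vM <= (pid_mx j : 'M[k]_d) *m WM)%MS.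
  apply/negP => /(coordL uM); rewrite /vM rowE mulmxK // => /matrixP /(_ 0 j).
  by rewrite pidM_r !mxE !eqxx ltnn mulr0 /= => /eqP; rewrite oner_eq0.
have vS2 : (vM <= SM j.+1)%MS by apply: submx_trans M2'.
set u := vM *m f.
have u2 : (u <= (pid_mx j.+1 : 'M[k]_d) *m WN)%MS.
  by apply: submx_trans N2; apply: submx_trans h1; apply: submxMr.
have u1 : ~~ (u <= SN j)%MS.
  apply/negP => /(h5 _ vS2) => h; move/negP: vM1; apply; exact: submx_trans h M1.
have A1 := flag_diag a fM vM2; have A2 := flag_diag a fN u2.
have A3 : (vM *m (act rhoM a *m f - f *m act rhoN a) <= SN j)%MS.
  exact: submx_trans (submxMr _ vS2) (h3 a).
have A1' : ((vM *m act rhoM a - Bm rhoM WM a j j *: vM) *m f <= SN j)%MS.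
  exact: submx_trans (submxMr _ (submx_trans A1 M1')) h2.
have A2' : (u *m act rhoN a - Bm rhoN WN a j j *: u <= SN j)%MS.
  by apply: submx_trans A2 N1'.
case: (eqVneq (Bm rhoM WM a j j - Bm rhoN WN a j j) 0) => [/eqP|nz].
  by rewrite subr_eq0 => /eqP.
exfalso; move/negP: u1; apply.
set c := Bm rhoM WM a j j - Bm rhoN WN a j j.
have -> : u = c^-1 *: (c *: u) by rewrite scalerA mulVf // scale1r.
apply: scalemx_sub.
have -> : c *: u = (vM *m (act rhoM a *m f - f *m act rhoN a) +
   (u *m act rhoN a - Bm rhoN WN a j j *: u)) -
   ((vM *m act rhoM a - Bm rhoM WM a j j *: vM) *m f).
  rewrite /u /c mulmxBr mulmxBl -scalemxAl !mulmxA scalerBl.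
  rewrite addrA (subrK (vM *m f *m act rhoN a)) opprB addrC addrA.
  by rewrite (addrAC _ (vM *m act rhoM a *m f)) addrK addrC.
apply: addmx_sub; first exact: addmx_sub A3 A2'.
by rewrite -scaleN1r; apply: scalemx_sub.
Qed.

End Rep.



Section Constr.
Variables (k : fieldType) (A : falgType k) (d : nat).
Variables (rho : A -> 'M[k]_d) (S : nat -> 'M[k]_d).
Hypothesis hr : is_rep rho.
Hypothesis cs : composition_series rho S.

Lemma ltS i : (i < d)%N -> (S i < S i.+1)%MS.
Proof. by case: cs => _ _ _ h hi; case: (h i.+1 hi). Qed.

Lemma monoS i j : (i <= j <= d)%N -> (S i <= S j)%MS.
Proof.
elim: j => [|j IH] /andP[hij hj]; first by rewrite leqn0 in hij; rewrite (eqP hij).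
case: (ltngtP i j.+1) hij => // h _; last by rewrite h.
apply: submx_trans (IH _) (ltmxW (ltS hj)).
by rewrite -ltnS h ltnW.
Qed.

Lemma rankS_lo i : (i <= d)%N -> (i <= \rank (S i))%N.
Proof.
elim: i => // i IH hi; apply: leq_ltn_trans (IH (ltnW hi)) _.
exact: rank_ltmx (ltS hi).
Qed.

Lemma rankS i : (i <= d)%N -> \rank (S i) = i.
Proof.
move=> hi; apply/eqP; rewrite eqn_leq rankS_lo // andbT.
have H : forall n i, (i + n = d)%N -> (\rank (S i) + n <= \rank (S d))%N.
  elim=> [i0|n IH i0 h]; first by rewrite !addn0 => ->.
  apply: leq_trans (IH i0.+1 _); last by rewrite addSnnS.
  rewrite addnS ltn_add2r; apply: rank_ltmx; apply: ltS.
  by rewrite -h -addSnnS leq_addr.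
have := H (d - i)%N i (subnKC hi); have := rank_leq_row (S d).
move=> h1 h2; have h3 := leq_trans h2 h1.
by rewrite -(leq_add2r (d - i)) (subnKC hi).
Qed.


Variables (E : {pred A}) (s : seq A).
Hypothesis hE : orthogonal_idempotents E.
Hypothesis us : uniq s.
Hypothesis sE : forall x, x \in s -> x \in E.
Hypothesis Es : forall x, x \in E -> x != 0 -> x \in s.

Lemma act_orth e f : e \in E -> f \in E ->
  act rho e *m act rho f = if f == e then act rho f else 0.
Proof.
move=> he hf; rewrite -actM //; case: eqP => [->|/eqP ne].
  by rewrite hE.1.
by rewrite hE.2 // ?act0 // eq_sym.
Qed.

Lemma pick_w (j : 'I_d) : exists w : 'rV[k]_d,
  [&& (w <= S j.+1)%MS, ~~ (w <= S j)%MS & all (fun e => (w *m act rho e <= w)%MS) s].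
Proof.
have := ltS (ltn_ord j); rewrite ltmxE => /andP[_ /row_subPn[l hl]].
set w0 := row l (S j.+1).
have w01 : (w0 <= S j.+1)%MS by apply: row_sub.
have [/hasP[e es he]|] := boolP (has (fun e => ~~ (w0 *m act rho e <= S j)%MS) s).
  exists (w0 *m act rho e); apply/and3P; split=> //.
    by case: cs => _ _ hs _; apply: submx_trans (submxMr _ w01) (hs _ (ltn_ord j) e).
  apply/allP => f fs; rewrite -mulmxA act_orth ?sE //.
  by case: eqP => [->|_]; rewrite ?submx_refl ?mulmx0 ?sub0mx.
move/hasPn => hn.
exists (w0 - \sum_(e <- s) w0 *m act rho e); apply/and3P; split.
- apply: addmx_sub => //; rewrite -scaleN1r; apply: scalemx_sub.
  apply: summx_sub => e _.
  by case: cs => _ _ hs _; apply: submx_trans (submxMr _ w01) (hs _ (ltn_ord j) e).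
- apply/negP => h; move/negP: hl; apply.
  rewrite -[row l _](subrK (\sum_(e <- s) w0 *m act rho e)).
  apply: addmx_sub => //; rewrite big_seq; apply: summx_sub => e es.
  by have := hn e es; rewrite negbK.
- apply/allP => f fs.
  have -> : (w0 - \sum_(e <- s) w0 *m act rho e) *m act rho f = 0.
    rewrite mulmxBl mulmx_suml (big_rem f fs) /= -mulmxA act_orth ?sE // eqxx.
    rewrite big1_seq ?addr0 ?subrr // => e /= es.
    rewrite -mulmxA act_orth ?sE ?(mem_rem es) //.
    move: es; rewrite mem_rem_uniq // inE => /andP[ne _].
    by rewrite eq_sym (negbTE ne) mulmx0.
  exact: sub0mx.
Qed.

Definition Wc := \matrix_(j < d) xchoose (pick_w j).

Lemma rowWc (j : 'I_d) : row j Wc = xchoose (pick_w j).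
Proof. exact: rowK. Qed.

Lemma rowpid (i : nat) (l : 'I_d) (M : 'M[k]_d) :
  row l ((pid_mx i : 'M[k]_d) *m M) = (l < i)%N%:R *: row l M.
Proof. by apply/matrixP => a b; rewrite [LHS]mxE pidM_l [RHS]mxE mxE. Qed.

Lemma Tsub i : (i <= d)%N -> ((pid_mx i : 'M[k]_d) *m Wc <= S i)%MS.
Proof.
move=> hi; apply/row_subP => l; rewrite rowpid.
case: (ltnP l i) => h; last by rewrite scale0r sub0mx.
rewrite scale1r rowWc; have /and3P[h1 _ _] := xchooseP (pick_w l).
by apply: submx_trans h1 (monoS _); rewrite h.
Qed.

Lemma erow_pid (j : 'I_d) : ('e_j : 'rV[k]_d) = 'e_j *m (pid_mx j.+1 : 'M[k]_d).
Proof.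
apply/matrixP => l m; rewrite pidM_r !mxE; case: (m =P j) => [->|_];
  rewrite ?andbT ?andbF ?mul0r //.
by rewrite ltnSn mulr1.
Qed.

Lemma rank_step (j : 'I_d) :
  (\rank ((pid_mx j : 'M[k]_d) *m Wc) < \rank ((pid_mx j.+1 : 'M[k]_d) *m Wc))%N.
Proof.
apply: rank_ltmx; rewrite ltmxE; apply/andP; split.
  apply: coordR; rewrite mul_pid_mx (minn_idPl (leqnSn _)).
  by rewrite (minn_idPr (ltnW (ltn_ord j))).
apply/negP => h.
have h1 : (row j Wc <= (pid_mx j.+1 : 'M[k]_d) *m Wc)%MS.
  by rewrite rowE; apply: coordR; rewrite -erow_pid.
have := submx_trans (submx_trans h1 h) (Tsub (ltnW (ltn_ord j))).
by rewrite rowWc; have /and3P[_ /negbTE -> _] := xchooseP (pick_w j).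
Qed.

Lemma rankT i : (i <= d)%N -> (i <= \rank ((pid_mx i : 'M[k]_d) *m Wc))%N.
Proof.
elim: i => // i IH hi.
exact: leq_ltn_trans (IH (ltnW hi)) (rank_step (Ordinal hi)).
Qed.

Lemma unitWc : Wc \in unitmx.
Proof.
rewrite -row_free_unit /row_free eqn_leq rank_leq_row /=.
by have := rankT (leqnn d); rewrite pid_mx_1 mul1mx.
Qed.

Lemma TeqS i : (i <= d)%N -> (S i == (pid_mx i : 'M[k]_d) *m Wc)%MS.
Proof.
move=> hi; have h := Tsub hi; rewrite /eqmx h andbT.
by rewrite -(mxrank_leqif_sup h).2 rank_flag ?unitWc // rankS.
Qed.

Lemma flagWc : flagged rho Wc.
Proof.
split; first exact: unitWc.
move=> a j i hji.
have -> : Bm rho Wc a j i = row j (Bm rho Wc a) 0 i by rewrite [RHS]mxE.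
rewrite /Bm !row_mul rowWc.
have /and3P[h1 _ _] := xchooseP (pick_w j).
have h2 : (xchoose (pick_w j) *m act rho a <= (pid_mx j.+1 : 'M[k]_d) *m Wc)%MS.
  have /andP[hT _] := TeqS (ltn_ord j); apply: (submx_trans _ hT).
  by case: cs => _ _ hs _; apply: submx_trans (submxMr _ h1) (hs _ (ltn_ord j) a).
rewrite (coordL unitWc h2) pidM_r.
by rewrite ltnNge hji mulr0.
Qed.

Lemma diagWc e : e \in E -> forall i j : 'I_d, i != j -> Bm rho Wc e i j = 0.
Proof.
move=> he i j nij.
have -> : Bm rho Wc e i j = row i (Bm rho Wc e) 0 j by rewrite [RHS]mxE.
rewrite /Bm !row_mul rowWc.
have [-> | nz] := eqVneq e 0; first by rewrite act0 // mulmx0 mul0mx mxE.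
have /and3P[_ _ /allP /(_ e (Es he nz)) /sub_rVP[c ->]] := xchooseP (pick_w i).
rewrite -scalemxAl -rowWc -row_mul mulmxV ?unitWc // !mxE.
by rewrite (negbTE nij) mulr0.
Qed.


Lemma construct : exists W, [/\ flagged rho W,
  forall i, (i <= d)%N -> (S i == (pid_mx i : 'M[k]_d) *m W)%MS &
  forall e, e \in E -> forall i j : 'I_d, i != j -> Bm rho W e i j = 0].
Proof. by exists Wc; split; [exact: flagWc | exact: TeqS | exact: diagWc]. Qed.

End Constr.



Section Alg.
Variables (k : fieldType) (A : falgType k).

Lemma amullE' (u x : A) : amull u x = u * x.
Proof. by rewrite lfunE. Qed.

Lemma free_orth (E : {pred A}) (s : seq A) : orthogonal_idempotents E -> uniq s ->
  (forall x, x \in s -> x \in E /\ x != 0) -> free s.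
Proof.
move=> hE us hs; rewrite -[s]/(val (in_tuple s)); apply/freeP => kk h i.
have := congr1 (fun v => s`_i * v) h; rewrite mulr0 mulr_sumr.
rewrite (bigD1 i) //= big1 => [|l nl].
  have [si nzi] := hs _ (mem_nth 0 (ltn_ord i)).
  rewrite addr0 -scalerAr hE.1 // => /eqP; rewrite scaler_eq0 (negbTE nzi) orbF.
  by move/eqP.
rewrite -scalerAr.
have [si _] := hs _ (mem_nth 0 (ltn_ord i)); have [sl _] := hs _ (mem_nth 0 (ltn_ord l)).
rewrite hE.2 ?scaler0 // nth_uniq //.
by apply: contra nl => /eqP El; apply/eqP/val_inj.
Qed.

Lemma fin_orth (E : {pred A}) : orthogonal_idempotents E ->
  exists s : seq A, [/\ uniq s, (forall x, x \in s -> x \in E) &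
                       (forall x, x \in E -> x != 0 -> x \in s)].
Proof.
move=> hE.
suff H : forall n s, uniq s -> (forall x, x \in s -> x \in E /\ x != 0) ->
    (size s + n = (\dim (fullv : {vspace A})).+1)%N ->
    exists s : seq A, [/\ uniq s, (forall x, x \in s -> x \in E) &
                       (forall x, x \in E -> x != 0 -> x \in s)].
  by apply: (H _ [::]) => //.
elim=> [|n IH] s us hs hsz.
  have /eqP fs := free_orth hE us hs.
  have := dimvS (subvf <<s>>%VS); rewrite addn0 in hsz.
  by rewrite fs hsz ltnn.
case: (classic (exists x, [/\ x \in E, x != 0 & x \notin s])) => [[x [xE nx ns]]|nex].
  apply: (IH (x :: s)); first by rewrite /= ns.
    by move=> y; rewrite inE => /orP[/eqP ->|/hs].
  by rewrite /= addSnnS.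
exists s; split=> //; first by move=> x /hs[].
move=> x xE nx; apply/negPn/negP => ns; apply: nex; by exists x.
Qed.

Definition is_char (chi : A -> k) :=
  [/\ forall c x y, chi (c *: x + y) = c * chi x + chi y, chi 1 = 1 &
      forall x y, chi (x * y) = chi x * chi y].

Section Char.
Variable chi : A -> k.
Hypothesis hc : is_char chi.

Lemma chi0 : chi 0 = 0.
Proof.
case: hc => L _ _; have h := L 1 0 0; rewrite scale1r addr0 mul1r in h.
by apply: (@addrI _ (chi 0)); rewrite addr0 -h.
Qed.
Lemma chiZ c x : chi (c *: x) = c * chi x.
Proof. by case: hc => L _ _; rewrite -[c *: x]addr0 L chi0 addr0. Qed.
Lemma chiD x y : chi (x + y) = chi x + chi y.
Proof. by case: hc => L _ _; rewrite -[x]scale1r L mul1r scale1r. Qed.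
Lemma chiN x : chi (- x) = - chi x.
Proof. by rewrite -scaleN1r chiZ mulN1r. Qed.
Lemma chiB x y : chi (x - y) = chi x - chi y.
Proof. by rewrite chiD chiN. Qed.
Lemma chi1 : chi 1 = 1. Proof. by case: hc. Qed.
Lemma chiM x y : chi (x * y) = chi x * chi y. Proof. by case: hc. Qed.
Lemma chi_sum (I : Type) (r : seq I) (F : I -> A) :
  chi (\sum_(i <- r) F i) = \sum_(i <- r) chi (F i).
Proof. exact: (big_morph chi chiD chi0). Qed.
Lemma chi_horner (z : A) (p : {poly k}) : chi (horner_alg z p) = p.[chi z].
Proof.
elim/poly_ind: p => [|p c IH]; first by rewrite rmorph0 horner0 chi0.
rewrite rmorphD rmorphM /= horner_algX horner_algC hornerMXaddC chiD chiM IH.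
by rewrite chiZ chi1 mulr1.
Qed.
Lemma chi_idem e : e * e = e -> chi e = 0 \/ chi e = 1.
Proof.
move=> h; have /eqP : chi e * (chi e - 1) = 0 by rewrite mulrBr mulr1 -chiM h subrr.
by rewrite mulf_eq0 subr_eq0 => /orP[/eqP|/eqP]; auto.
Qed.
End Char.


Lemma annih (z : A) : exists p : {poly k}, p != 0 /\ horner_alg z p = 0.
Proof.
set n := \dim (fullv : {vspace A}).
set X := [tuple z ^+ i | i < n.+1].
have nf : ~~ free X.
  apply/negP => fs; have := dimvS (subvf <<X>>%VS).
  by rewrite (eqP fs) size_tuple ltnn.
move/freeP: nf => nf.
have [kk [hk [i ni]]] : exists kk : 'I_n.+1 -> k,
    \sum_(i < n.+1) kk i *: X`_i = 0 /\ exists i, kk i != 0.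
  apply: NNPP => H; apply: nf => kk hk i; apply/eqP/negPn/negP => ni.
  by apply: H; exists kk; split=> //; exists i.
exists (\poly_(j < n.+1) kk (inord j)); split.
  apply/eqP => /(congr1 (fun p : {poly k} => p`_i)).
  by rewrite coef_poly ltn_ord inord_val coef0 => /eqP; rewrite (negbTE ni).
rewrite poly_def linear_sum /=; rewrite -{}[in RHS]hk; apply: eq_bigr => j _.
by rewrite (nth_mktuple _ _ j) linearZ /= mulr_algl rmorphXn /= horner_algX inord_val.
Qed.


Lemma prim_char chi1 chi2 e z : is_char chi1 -> is_char chi2 ->
  primitive_idempotent e -> chi1 e = 1 -> e * z = z -> z * e = z ->
  chi1 z = 0 -> chi2 z = 0.
Proof.
move=> h1 h2 [ide nze nsplit] he1 ez ze z1.
apply/eqP/negPn/negP => nc; set c := chi2 z in nc.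
have [p [nzp pz]] := annih z.
case: (multiplicity_XsubC p 0) => m [q nq hpq].
rewrite nzp /= in nq; rewrite polyC0 subr0 in hpq.
have p0 : p.[0] = 0 by rewrite -z1 -(chi_horner h1) pz chi0.
have pc : p.[c] = 0 by rewrite -(chi_horner h2) pz chi0.
have m0 : (0 < m)%N.
  move: p0; rewrite hpq hornerM hornerXn; case: m {hpq} => [|m] //.
  by rewrite expr0 mulr1 => h; move: nq; rewrite /root h eqxx.
have qc : q.[c] = 0.
  move: pc; rewrite hpq hornerM hornerXn => /eqP.
  by rewrite mulf_eq0 expf_eq0 (negbTE nc) andbF orbF => /eqP.
have cop : coprimep ('X ^+ m) q.
  apply: coprimep_expl; rewrite coprimep_sym.
  by have := coprimep_XsubC q 0; rewrite polyC0 subr0 => ->.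
have [[u v] /= huv] := Bezout_eq1_coprimepP _ _ cop.
set f1 := horner_alg z (u * 'X ^+ m).
have f1g : f1 + horner_alg z (v * q) = 1 by rewrite -rmorphD huv rmorph1.
have fg0 : f1 * horner_alg z (v * q) = 0.
  rewrite -rmorphM /= (_ : u * 'X ^+ m * (v * q) = (u * v) * p).
    by rewrite rmorphM /= pz mulr0.
  by rewrite hpq mulrACA [q * _]mulrC.
have f1i : f1 * f1 = f1.
  by have := congr1 (fun x => f1 * x) f1g; rewrite /= mulrDr fg0 addr0 mulr1.
have zm : f1 = horner_alg z u * z ^+ m by rewrite /f1 rmorphM /= rmorphXn /= horner_algX.
have zm' : f1 = z ^+ m * horner_alg z u.
  by rewrite /f1 mulrC rmorphM /= rmorphXn /= horner_algX.
have zme : z ^+ m * e = z ^+ m by rewrite -(prednK m0) exprSr -mulrA ze.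
have ezm : e * z ^+ m = z ^+ m by rewrite -(prednK m0) exprS mulrA ez.
have f1e : f1 * e = f1 by rewrite {1}zm -mulrA zme -zm.
have ef1 : e * f1 = f1 by rewrite {1}zm' mulrA ezm -zm'.
apply: nsplit; exists f1, (e - f1).
split; first exact: f1i.
split.
  change ((e - f1) * (e - f1) = e - f1); rewrite mulrBr !mulrBl ide ef1 f1e f1i.
  by rewrite subrr subr0.
split.
  apply/eqP => h; have := chi_horner h2 z (u * 'X ^+ m); rewrite -/f1 h (chi0 h2).
  have : (u * 'X ^+ m).[c] + (v * q).[c] = 1 by rewrite -hornerD huv hornerC.
  rewrite [(v * q).[c]]hornerM qc mulr0 addr0 => -> /eqP.
  by rewrite eq_sym oner_eq0.
split.
  apply/eqP => h; have := chiB h1 e f1; rewrite h (chi0 h1) he1 (chi_horner h1).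
  rewrite z1 hornerM hornerXn expr0n (gtn_eqF m0) mulr0 subr0 => /eqP.
  by rewrite eq_sym oner_eq0.
split; first by rewrite mulrBr f1e f1i subrr.
split; first by rewrite mulrBl ef1 f1i subrr.
by rewrite addrC subrK.
Qed.


Definition lim (g : A) := \dim (limg (amull g)).

Lemma step2 chi g f o : is_char chi -> Defs.idempotent f -> Defs.idempotent o -> o != 0 ->
  f * o = 0 -> o * f = 0 -> g = f + o -> chi f = 1 ->
  exists h, [/\ Defs.idempotent h, chi h = 1, g * h = h, h * g = h & (lim h < lim g)%N].
Proof.
move=> hc fi oi nz fo ofz eg cf.
have gf : g * f = f by rewrite eg mulrDl fi ofz addr0.
have fg : f * g = f by rewrite eg mulrDr fi fo addr0.
exists f; split=> //.
have sub : (limg (amull f) <= limg (amull g))%VS.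
  apply/subvP => x /memv_imgP[y _ ->]; rewrite amullE' -gf -mulrA -amullE'.
  exact: memv_img (memvf _).
have oin : o \in limg (amull g).
  have -> : o = amull g o by rewrite amullE' eg mulrDl fo oi add0r.
  exact: memv_img (memvf _).
have onot : o \notin limg (amull f).
  apply/negP => /memv_imgP[y _]; rewrite amullE' => ey.
  move/eqP: nz; apply; by rewrite -oi {2}ey mulrA ofz mul0r.
rewrite /lim ltn_neqAle (dimvS sub) andbT (dimv_leqif_eq sub).2.
by apply: contra onot => /eqP ->.
Qed.

Lemma split_step chi g : is_char chi -> Defs.idempotent g -> chi g = 1 ->
  ~ primitive_idempotent g ->
  exists h, [/\ Defs.idempotent h, chi h = 1, g * h = h, h * g = h & (lim h < lim g)%N].
Proof.
move=> hc gi cg np.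
have nz : g != 0 by apply/eqP => h; move: cg; rewrite h (chi0 hc) => /eqP; rewrite eq_sym oner_eq0.
have [f1 [f2 [i1 [i2 [n1 [n2 [o12 [o21 eg]]]]]]]] :
  exists f g0 : A, Defs.idempotent f /\ Defs.idempotent g0 /\ f != 0 /\ g0 != 0 /\
                   f * g0 = 0 /\ g0 * f = 0 /\ g = f + g0.
  by apply: NNPP => nex; apply: np; split.
have s1 : chi f1 + chi f2 = 1 by rewrite -(chiD hc) -eg.
have p0 : chi f1 * chi f2 = 0 by rewrite -(chiM hc) o12 (chi0 hc).
have [c2|c2] := eqVneq (chi f2) 0.
  by apply: (step2 hc i1 i2 n2 o12 o21 eg); rewrite -s1 c2 addr0.
have c1 : chi f1 = 0 by move/eqP: p0; rewrite mulf_eq0 (negbTE c2) orbF => /eqP.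
apply: (step2 hc i2 i1 n1 o21 o12); first by rewrite addrC.
by rewrite -s1 c1 add0r.
Qed.

Lemma Mp chi : is_char chi -> forall n g, (lim g <= n)%N -> Defs.idempotent g -> chi g = 1 ->
  exists h, [/\ primitive_idempotent h, g * h = h, h * g = h & chi h = 1].
Proof.
move=> hc; elim=> [|n IH] g hn gi cg.
  case: (classic (primitive_idempotent g)) => pg; first by exists g.
  have [h [_ _ _ _ lt]] := split_step hc gi cg pg.
  by rewrite leqn0 in hn; rewrite (eqP hn) in lt.
case: (classic (primitive_idempotent g)) => pg; first by exists g.
have [f [fi cf gf fg lt]] := split_step hc gi cg pg.
have [h [ph fh hf ch]] := IH f (leq_trans lt hn : (lim f <= n)%N) fi cf.
exists h; split=> //.
  by rewrite -fh mulrA gf.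
by rewrite -hf -mulrA fg.
Qed.


Lemma char_hits chi E : is_char chi -> complete_orthogonal_primitive_set E ->
  exists e, e \in E /\ chi e = 1.
Proof.
move=> hc [[hE hP] cmp].
have [s [us sE Es]] := fin_orth hE.
case: (boolP (has (fun e => chi e != 0) s)) => [/hasP[e es ce]|/hasPn hn].
  exists e; split; first exact: sE.
  by case: (chi_idem hc (hE.1 e (sE e es))) => // h; rewrite h eqxx in ce.
have sumx : forall x, x \in E -> x * (\sum_(e <- s) e) = x /\ (\sum_(e <- s) e) * x = x.
  move=> x xE; have [->|nz] := eqVneq x 0; first by rewrite mul0r mulr0.
  have xs := Es x xE nz.
  have ne : forall y, y \in rem x s -> (y \in E) /\ (x != y).
    move=> y yr; split; first exact: sE (mem_rem yr).
    by move: yr; rewrite mem_rem_uniq // inE eq_sym => /andP[].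
  rewrite mulr_sumr mulr_suml !(big_rem x xs) /= (hE.1 x xE).
  split; rewrite big1_seq ?addr0 // => y /andP[_ yr]; have [yE nxy] := ne y yr.
    exact: hE.2.
  by apply: hE.2; rewrite // eq_sym.
set g := 1 - \sum_(e <- s) e.
have gx : forall x, x \in E -> x * g = 0 /\ g * x = 0.
  move=> x xE; have [s1 s2] := sumx x xE.
  by rewrite /g mulrBr mulr1 s1 subrr mulrBl mul1r s2 subrr.
have gi : Defs.idempotent g.
  rewrite /Defs.idempotent {1}/g mulrBl mul1r mulr_suml big1_seq ?subr0 //.
  by move=> e /andP[_ es]; exact: (gx e (sE e es)).1.
have cg : chi g = 1.
  rewrite /g (chiB hc) (chi1 hc) (chi_sum hc) big1_seq ?subr0 //.
  by move=> e /andP[_ es]; have := hn e es; rewrite negbK => /eqP.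
have [h [ph gh hg ch]] := Mp hc (leqnn _) gi cg.
have hx : forall x, x \in E -> x * h = 0 /\ h * x = 0.
  move=> x xE; have [g1 g2] := gx x xE.
  by split; [rewrite -gh mulrA g1 mul0r | rewrite -hg -mulrA g2 mulr0].
have hnE : h \notin E.
  apply/negP => hE'; have := (gx h hE').1; rewrite hg => h0.
  by case: ph => _ /eqP; rewrite h0.
have op : orthogonal_primitive_set [pred y | (y \in E) || (y == h)].
  split; [split|].
  - move=> y; rewrite inE => /orP[/hE.1 //|/eqP ->]; by case: ph.
  - move=> y z; rewrite !inE => /orP[yE|/eqP->] /orP[zE|/eqP->] nyz.
    + exact: hE.2.
    + exact: (hx y yE).1.
    + exact: (hx z zE).2.
    + by rewrite eqxx in nyz.
  - by move=> y; rewrite inE => /orP[/hP|/eqP ->].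
have := cmp _ op; rewrite /= => H.
have : h \in E by apply: H; rewrite ?inE ?eqxx ?orbT // => y yE; rewrite inE yE.
by rewrite (negbTE hnE).
Qed.

Lemma char_eq chi1 chi2 E : is_char chi1 -> is_char chi2 ->
  complete_orthogonal_primitive_set E -> (forall e, e \in E -> chi1 e = chi2 e) ->
  forall x, chi1 x = chi2 x.
Proof.
move=> h1 h2 cE ag x.
have [e [eE c1]] := char_hits h1 cE.
have c2 : chi2 e = 1 by rewrite -ag.
have pe : primitive_idempotent e by case: cE => [[_ hP] _]; exact: hP.
have ide : e * e = e by case: pe.
set y := e * x * e.
have cy1 : chi1 y = chi1 x by rewrite /y !(chiM h1) c1 mul1r mulr1.
have cy2 : chi2 y = chi2 x by rewrite /y !(chiM h2) c2 mul1r mulr1.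
set z := y - chi1 y *: e.
have ez : e * z = z.
  by rewrite /z mulrBr /y !mulrA ide -scalerAr ide.
have ze : z * e = z.
  by rewrite /z mulrBl /y -!mulrA ide -scalerAl ide.
have z1 : chi1 z = 0 by rewrite /z (chiB h1) (chiZ h1) c1 mulr1 subrr.
have := prim_char h1 h2 pe c1 ez ze z1.
rewrite /z (chiB h2) (chiZ h2) c2 mulr1 => /eqP; rewrite subr_eq0 => /eqP.
by rewrite cy2 cy1 => ->.
Qed.

End Alg.



Lemma tri_char (k : fieldType) (A : falgType k) (d : nat) (mu : A -> 'M[k]_d) (j : 'I_d) :
  is_rep mu -> triangular_rep mu -> is_char (fun a => mu a j j).
Proof.
move=> [L h1 hM] tm; split.
- by move=> c x y; rewrite L !mxE.
- by rewrite h1 mxE eqxx.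
- move=> x y; rewrite hM mxE (bigD1 j) //= big1 ?addr0 // => l nl.
  case: (ltngtP l j) => h.
  + by rewrite tm ?mul0r.
  + by rewrite [mu y l j]tm ?mulr0.
  + by move: nl; rewrite (val_inj h) eqxx.
Qed.

Unset Implicit Arguments.
Set Strict Implicit.
Theorem proposition4p1 (k : closedFieldType) (A : falgType k) (d : nat)
    (rhoM rhoN : A -> 'M[k]_d) :
  basic_algebra A -> is_rep rhoM -> is_rep rhoN ->
  let P1 := exists SM SN : nat -> 'M[k]_d,
      [/\ composition_series rhoM SM, composition_series rhoN SN &
          forall i, (0 < i <= d)%N ->
            subquot_iso rhoM (SM i.-1) (SM i) rhoN (SN i.-1) (SN i)] in
  let P2 := forall E : {pred A}, orthogonal_idempotents E ->
      exists mu nu : A -> 'M[k]_d,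
      is_rep mu /\ is_rep nu /\ rep_of mu rhoM /\ rep_of nu rhoN /\
      triangular_rep mu /\ triangular_rep nu /\
      (forall e, e \in E -> mu e = nu e) in
  let P3 := exists E : {pred A}, complete_orthogonal_primitive_set E /\
      exists mu nu : A -> 'M[k]_d,
      is_rep mu /\ is_rep nu /\ rep_of mu rhoM /\ rep_of nu rhoN /\
      triangular_rep mu /\ triangular_rep nu /\
      (forall e, e \in E -> mu e = nu e) in
  (P1 <-> P2) /\ (P2 <-> P3).
Proof.
move=> basic hM hN P1 P2 P3.
have p12 : P1 -> P2.
  move=> [SM [SN [csM csN iso]]] E hE.
  have [s [us sE Es]] := fin_orth hE.
  have [WM [fM tM dM]] := construct hM csM hE us sE Es.
  have [WN [fN tN dN]] := construct hN csN hE us sE Es.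
  have [rM oM trM] := flag_to_rep hM fM.
  have [rN oN trN] := flag_to_rep hN fN.
  exists (fun a => (Bm rhoM WM a)^T), (fun a => (Bm rhoN WN a)^T).
  do 6!(split=> //).
  move=> e eE; apply/matrixP => i j; rewrite [LHS]mxE [RHS]mxE.
  have [<-|nij] := eqVneq j i.
    apply: (iso_diag e fM fN (tM _ (ltnW (ltn_ord j))) (tM _ (ltn_ord j))
                           (tN _ (ltnW (ltn_ord j))) (tN _ (ltn_ord j))).
    exact: (iso j.+1 (ltn_ord j)).
  by rewrite dM // dN.
have p23 : P2 -> P3.
  move=> h2; have [E [cE _]] := basic.
  exists E; split=> //; apply: h2; by case: cE => [[]].
have p31 : P3 -> P1.
  move=> [E [cE [mu [nu [rm [rn [om [on [tm [tn ag]]]]]]]]]].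
  have [WM [fM EM]] := rep_to_flag tm om.
  have [WN [fN EN]] := rep_to_flag tn on.
  have dg : forall a j, Bm rhoM WM a j j = Bm rhoN WN a j j.
    move=> a j; rewrite EM EN [LHS]mxE [RHS]mxE.
    apply: (char_eq (tri_char j rm tm) (tri_char j rn tn) cE) => e eE.
    by rewrite /= ag.
  exists (fun i => (pid_mx i : 'M[k]_d) *m WM), (fun i => (pid_mx i : 'M[k]_d) *m WN).
  split; [exact: flag_comp fM | exact: flag_comp fN | exact: flag_iso].
by split; split; [exact: p12 | move=> h; exact: p31 (p23 h) | exact: p23 |
                  move=> h; exact: p12 (p31 h)].
Qed.
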